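(* In the setting described in the context, suppose the binary-flux assumption holds. Then the following are equivalent: (i) (class decomposition) for every $k\in K$ there exists $E^k\subset\bar J_n$ such that $k=\bigcup_{j\in E^k}\mathcal O^j$; (ii) there exists an optimal weight family; (iii) the family $\bar w^K=(\bar w^k)_{k\in K}$ defined by $\bar w^{j\to k}:=\frac{b_1}{b_2|\bar J^k_n|}\mathbb 1_{j\in\bar J^k_n}$, where $\bar J^k_n:=\arg\max_{j\in\bar J_n}\Phi^{j\to k}_{\mathrm{disc}}$, is an optimal weight family.
   Context: Let $\mathcal O$ be a finite set of sample types and $K$ a finite set of classes with $|K|\ge2$, each class $k\in K$ identified with a nonempty subset of $\mathcal O$, the classes forming a partition of $\mathcal O$ (so ''$o\in k$'' means type $o$ has class $k$). Let $\bar J_n$ be a finite nonempty index set (selected $n$-element subsets of input species), and for each $o\in\mathcal O$ and $j\in\bar J_n$ let $\int_o\Phi^j\ge0$ be a given number (the integrated flux of $j$ during presentation of a sample of type $o$). Let $b_1,b_2>0$. Flux discrepancy: $\Phi^{j\to k}_{\mathrm{disc}}:=\frac{1}{|k|}\sum_{o\in k}\int_o\Phi^j-\frac{1}{|K|-1}\sum_{k'\ne k}\frac{1}{|k'|}\sum_{o\in k'}\int_o\Phi^j$. An optimal weight family is $q^K=(q^k)_{k\in K}$ with $q^k=(q^{j\to k})_{j\in\bar J_n}$, $q^{j\to k}\ge0$, $\sum_jq^{j\to k}=\frac{b_1}{b_2}$, such that for all $k\in K$ and $o\in\mathcal O$: $\sum_{j\in\bar J_n}q^{j\to k}\int_o\Phi^j>0$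 if and only if $o\in k$. Binary-flux assumption: there is $p>0$ such that $\int_o\Phi^j\in\{0,p\}$ for all $j\in\bar J_n$, $o\in\mathcal O$; setting $\mathcal O^j:=\{o\in\mathcal O:\int_o\Phi^j=p\}$, all the sets $\mathcal O^j$, $j\in\bar J_n$, have the same cardinality. *)

(* Defs.v *)
From mathcomp Require Import all_boot all_order all_algebra.
Set Implicit Arguments. Unset Strict Implicit. Unset Printing Implicit Defensive.
Import Order.TTheory GRing.Theory Num.Theory.
Local Open Scope ring_scope.

Section Defs.
Variables (R : realFieldType) (O K J : finType).
(* cls o = the class of sample type o; the classes partition O. *)
Variable cls : O -> K.
(* flux o j = \int_o \Phi^j *)
Variable flux : O -> J -> R.

Definition class_set (k : K) : {set O} := [set o | cls o == k].

Definition disc (j : J) (k : K) : R :=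
  (#|class_set k|%:R)^-1 * \sum_(o in class_set k) flux o j
  - (#|K|%:R - 1)^-1 *
    \sum_(k' in K | k' != k) (#|class_set k'|%:R)^-1 * \sum_(o in class_set k') flux o j.

Definition optimal_weight_family (b1 b2 : R) (q : K -> J -> R) : Prop :=
  [/\ forall k j, 0 <= q k j,
      forall k, \sum_(j in J) q k j = b1 / b2 &
      forall k o, (0 < \sum_(j in J) q k j * flux o j) <-> cls o = k].

Definition Oj (p : R) (j : J) : {set O} := [set o | flux o j == p].

Definition Jbar (k : K) : {set J} := [set j | [forall j', disc j' k <= disc j k]].

Definition wbar (b1 b2 : R) (k : K) (j : J) : R :=
  if j \in Jbar k then b1 / (b2 * #|Jbar k|%:R) else 0.
End Defs.

(* Main.v *)
Require Import Defs.
From mathcomp Require Import all_boot all_order all_algebra.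
From mathcomp Require Import ring.
Import Order.TTheory GRing.Theory Num.Theory.
Local Open Scope ring_scope.

Section Aux.
Variables (R : realFieldType) (O K J : finType) (cls : O -> K) (flux : O -> J -> R) (p : R).
Hypothesis pgt0 : 0 < p.
Hypothesis bin : forall o j, flux o j = 0 \/ flux o j = p.

Lemma flux_ge0 o j : 0 <= flux o j.
Proof. by case: (bin o j) => ->; rewrite ?lexx ?ltW. Qed.

Lemma inOj o j : (o \in Oj flux p j) = (flux o j == p).
Proof. by rewrite inE. Qed.

Lemma flux_notOj o j : o \notin Oj flux p j -> flux o j = 0.
Proof. by rewrite inOj; case: (bin o j) => ->; rewrite ?eqxx. Qed.

Lemma pos_sum (q : J -> R) o : (forall j, 0 <= q j) ->
  (0 < \sum_j q j * flux o j) <-> exists j, 0 < q j /\ o \in Oj flux p j.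
Proof.
move=> q0; split.
- move=> H.
  have Hn : forall j, predT j -> 0 <= q j * flux o j.
    by move=> j _; rewrite mulr_ge0 // flux_ge0.
  have Hne : \sum_(j | predT j) q j * flux o j <> 0.
    by move=> E; rewrite E ltxx in H.
  have [j /andP[_ Hj]] := psumr_neq0P Hn Hne.
  exists j; split.
    rewrite lt0r q0 andbT; apply/eqP => E; by rewrite E mul0r ltxx in Hj.
  rewrite inOj; case: (bin o j) => E; last by rewrite E.
  by rewrite E mulr0 ltxx in Hj.
- move=> [j [Hq Ho]]; rewrite (bigD1 j) //=.
  rewrite ltr_pwDl //; first by rewrite mulr_gt0 //; move: Ho; rewrite inOj => /eqP ->.
  by rewrite sumr_ge0 // => i _; rewrite mulr_ge0 // flux_ge0.
Qed.

Lemma sum_flux (A : {set O}) j :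
  \sum_(o in A) flux o j = #|A :&: Oj flux p j|%:R * p.
Proof.
rewrite (eq_bigr (fun o => if o \in Oj flux p j then p else 0)); last first.
  move=> o _; case: ifP; first by rewrite inOj => /eqP.
  by rewrite inOj; case: (bin o j) => ->; rewrite ?eqxx.
rewrite -big_mkcondr /=.
rewrite (eq_bigl (fun o => o \in A :&: Oj flux p j)); last by move=> o; rewrite [in RHS]inE.
by rewrite sumr_const mulr_natl.
Qed.
End Aux.
Arguments pos_sum {R O J flux p}.
Arguments sum_flux {R O J flux p}.

Theorem theorem13 (R : realFieldType) (O K J : finType) (cls : O -> K)
    (flux : O -> J -> R) (b1 b2 p : R) :
  (forall k : K, exists o : O, cls o = k) ->
  (1 < #|K|)%N ->
  (0 < #|J|)%N ->
  (forall o j, 0 <= flux o j) ->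
  0 < b1 -> 0 < b2 ->
  (* binary-flux assumption *)
  0 < p ->
  (forall o j, flux o j = 0 \/ flux o j = p) ->
  (forall j j' : J, #|Oj flux p j| = #|Oj flux p j'|) ->
  ((forall k : K, exists E : {set J},
       class_set cls k = \bigcup_(j in E) Oj flux p j)
   <-> (exists q : K -> J -> R, optimal_weight_family cls flux b1 b2 q))
  /\
  ((exists q : K -> J -> R, optimal_weight_family cls flux b1 b2 q)
   <-> optimal_weight_family cls flux b1 b2 (wbar cls flux b1 b2)).
Proof.
move=> Kne K1 J0 f0 b10 b20 p0 bin card.
set I := forall k : K, exists E : {set J},
       class_set cls k = \bigcup_(j in E) Oj flux p j.
set II := exists q : K -> J -> R, optimal_weight_family cls flux b1 b2 q.
set III := optimal_weight_family cls flux b1 b2 (wbar cls flux b1 b2).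
have h32 : III -> II by move=> H; exists (wbar cls flux b1 b2).
have h21 : II -> I.
  move=> [q [q0 _ qc]] k; exists [set j | 0 < q k j].
  apply/setP => o; rewrite inE; apply/eqP/bigcupP.
  - move=> /(qc k o) /(pos_sum p0 bin _ _ (q0 k)) [j [Hj Ho]].
    by exists j => //; rewrite inE.
  - move=> [j]; rewrite inE => Hj Ho; apply/(qc k o).
    by apply/(pos_sum p0 bin _ _ (q0 k)); exists j.
have h13 : I -> III.
  move=> HI.
  pose F k := [set j | Oj flux p j \subset class_set cls k].
  have Fcov k : class_set cls k = \bigcup_(j in F k) Oj flux p j.
    apply/setP => o; apply/idP/bigcupP.
    - have [E HE] := HI k; rewrite HE => /bigcupP [j jE oj].
      exists j => //; rewrite inE HE; exact: (bigcup_sup j jE).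
    - by move=> [j]; rewrite inE => /subsetP H /H.
  have Fne k : exists j, j \in F k.
    have [o Ho] := Kne k.
    have : o \in class_set cls k by rewrite inE Ho.
    by rewrite Fcov => /bigcupP [j Hj _]; exists j.
  have ck k : (0 < #|class_set cls k|%:R :> R).
    have [o Ho] := Kne k; rewrite ltr0n; apply/card_gt0P; exists o; by rewrite inE Ho.
  have ub k j : disc cls flux j k <= #|class_set cls k|%:R^-1 * (#|class_set cls k :&: Oj flux p j|%:R * p).
    rewrite /disc (sum_flux (p:=p)) // lerBlDr lerDl mulr_ge0 //.
      by rewrite invr_ge0 subr_ge0 ler1n ltnW.
    by rewrite sumr_ge0 // => i _; rewrite mulr_ge0 ?invr_ge0 // sumr_ge0.
  have dF k j : j \in F k -> disc cls flux j k = #|class_set cls k|%:R^-1 * (#|Oj flux p j|%:R * p).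
    rewrite inE => sub; rewrite /disc (sum_flux (p:=p)) // (setIidPr sub).
    rewrite big1 ?mulr0 ?subr0 // => k' kk'.
    rewrite (sum_flux (p:=p)) // (_ : _ :&: _ = set0) ?cards0 ?mul0r ?mulr0 //.
    apply/setP => o; rewrite !inE; apply/negP => /andP[/eqP ok' oj].
    have := subsetP sub o; rewrite !inE oj => /(_ isT) /eqP.
    by rewrite ok'; move/eqP: kk'.
  have dnF k j : j \notin F k -> disc cls flux j k < #|class_set cls k|%:R^-1 * (#|Oj flux p j|%:R * p).
    rewrite inE => nsub; apply: (le_lt_trans (ub k j)).
    rewrite ltr_pM2l ?invr_gt0 // ltr_pM2r // ltr_nat; apply: proper_card.
    rewrite properE subsetIr /=; apply/negP => /subsetP H; move/negP: nsub; apply.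
    by apply/subsetP => o /H /setIP [].
  have JF k : Jbar cls flux k = F k.
    have [j0 Hj0] := Fne k.
    apply/setP => j; rewrite [in LHS]inE; apply/forallP/idP.
    - move=> H; apply/negPn/negP => nj; have := H j0.
      by rewrite (dF _ _ Hj0) (card j0 j) leNgt dnF.
    - move=> Hj j'; rewrite (dF _ _ Hj) (card j j').
      have [Hj'|Hj'] := boolP (j' \in F k); first by rewrite dF.
      by rewrite ltW // dnF.
  have wpos k j : (0 < wbar cls flux b1 b2 k j) = (j \in F k).
    rewrite /wbar JF; case: ifP => // Hj; rewrite divr_gt0 // mulr_gt0 // ltr0n.
    by apply/card_gt0P; exists j.
  have wge k j : 0 <= wbar cls flux b1 b2 k j.
    rewrite /wbar; case: ifP => _ //.
    apply: divr_ge0; [exact: ltW | apply: mulr_ge0; [exact: ltW | exact: ler0n]].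
  split => //.
  - move=> k; rewrite /wbar -big_mkcond /= sumr_const JF.
    have n0 : (#|F k|%:R : R) != 0.
      by rewrite pnatr_eq0 -lt0n; have [j Hj] := Fne k; apply/card_gt0P; exists j.
    rewrite -mulr_natl; field; rewrite n0 andbT; exact: lt0r_neq0.
  - move=> k o; rewrite (pos_sum p0 bin _ _ (wge k)); split.
    + move=> [j [Hw Ho]].
      have : o \in class_set cls k by rewrite Fcov; apply/bigcupP; exists j => //; rewrite -wpos.
      by rewrite inE => /eqP.
    + move=> Hk; have : o \in class_set cls k by rewrite inE Hk.
      rewrite Fcov => /bigcupP [j Hj Ho]; exists j; by rewrite wpos.

split; split.
- by move=> /h13 /h32.
- exact: h21.
- by move=> /h21 /h13.
- exact: h32.
Qed.
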